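(* Let $\Lambda:\{-1,1\}^k\to\{0,1\}$ be a predicate, $c\in\mathbb R$, let $\mathcal I^*$ be an instance of $\mathrm{CSP}(\Lambda)$ on $n$ variables with $\mathrm{opt}(\mathcal I^* )=s$, let $f(x)=c-\mathcal I^*(x)$, and let $g:[q]\times[q]\to\{-1,1\}$. Then $M^g_f$ is a submatrix of $\mathcal M_{q\cdot n,s}$ in the following sense: there exist maps $y\mapsto\mathcal I_y$ from $[q]^n$ to $\Lambda^s_{qn}$ and $x\mapsto\tilde x$ from $[q]^n$ to $\{-1,1\}^{qn}$ such that $\mathcal M_{q\cdot n,s}(\mathcal I_y,\tilde x)=M^g_f(x,y)$ for all $x,y\in[q]^n$.
   Context: An instance $\mathcal I$ of $\mathrm{CSP}(\Lambda)$ on $N$ variables is a list of constraints, each a $k$-tuple of literals over the variables; $\mathcal I(x)$ is the fraction of constraints satisfied by $x\in\{-1,1\}^N$ and $\mathrm{opt}(\mathcal I)=\max_x\mathcal I(x)$. $\Lambda^s_N$ denotes the family of all instances of $\mathrm{CSP}(\Lambda)$ on $N$ variables with $\mathrm{opt}(\mathcal I)\le s$, and $\mathcal M_{N,s}:\Lambda^s_N\times\{-1,1\}^N\to\mathbb R$ is the matrix $\mathcal M_{N,s}(\mathcal I,x)=c-\mathcal I(x)$. For $f:\{-1,1\}^n\to\mathbb R$, $M^g_f$ is the $[q]^n\times[q]^n$ matrix with $M^g_f(x,y)=f(g(x_1,y_1),\dots,g(x_n,y_n))$. *)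

(* Defs.v *)
From mathcomp Require Import all_boot all_order all_algebra.
Set Implicit Arguments. Unset Strict Implicit. Unset Printing Implicit Defensive.
Import Order.TTheory GRing.Theory Num.Theory.
Local Open Scope ring_scope.

(* Signs {-1,1} are encoded by bool: true <-> -1, false <-> 1
   (so the product of signs is xor). *)
Definition sign := bool.

Definition assignment (N : nat) := {ffun 'I_N -> sign}.

Definition literal (N : nat) := ('I_N * bool)%type.
Definition lit_val N (l : literal N) (x : assignment N) : sign := x l.1 (+) l.2.

Definition constraint (k N : nat) := {ffun 'I_k -> literal N}.
Definition instance (k N : nat) := seq (constraint k N).

Definition predicate (k : nat) := {ffun 'I_k -> sign} -> bool.

Definition satisfies k N (Lam : predicate k) (C : constraint k N) (x : assignment N) : bool :=
  Lam [ffun i => lit_val (C i) x].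

(* I(x) : fraction of constraints satisfied (0 for the empty instance). *)
Definition inst_val (R : realFieldType) k N (Lam : predicate k) (I : instance k N)
    (x : assignment N) : R :=
  (count (fun C => satisfies Lam C x) I)%:R / (size I)%:R.

(* opt(I) = max_x I(x)  (all values are >= 0, so starting the max at 0 is harmless). *)
Definition opt (R : realFieldType) k N (Lam : predicate k) (I : instance k N) : R :=
  \big[Num.max/0]_(x : assignment N) inst_val R Lam I x.

Definition in_family (R : realFieldType) k N (Lam : predicate k) (s : R) (I : instance k N) : Prop :=
  opt R Lam I <= s.

Definition MNs (R : realFieldType) k N (Lam : predicate k) (c : R) (I : instance k N)
    (x : assignment N) : R := c - inst_val R Lam I x.

Definition Mgf (R : realFieldType) (n q : nat) (f : assignment n -> R)
    (g : 'I_q -> 'I_q -> sign) (x y : {ffun 'I_n -> 'I_q}) : R :=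
  f [ffun i => g (x i) (y i)].

(* Main.v *)
Require Import Defs.
From mathcomp Require Import all_boot all_order all_algebra.
Import Order.TTheory GRing.Theory Num.Theory.
Local Open Scope ring_scope.

Section Aux.
Variables (R : realFieldType) (k n q : nat) (Lam : predicate k).

Definition enc (a : 'I_q) (i : 'I_n) : 'I_(q * n) := mxvec_index a i.
Definition dec (v : 'I_(q * n)) : 'I_q * 'I_n :=
  enum_val (cast_ord (esym (mxvec_cast q n)) v).
Lemma decK a i : dec (enc a i) = (a, i).
Proof. by rewrite /dec /enc /mxvec_index cast_ordK enum_rankK. Qed.

Definition liftC (y : {ffun 'I_n -> 'I_q}) (C : constraint k n) : constraint k (q * n) :=
  [ffun j => (enc (y (C j).1) (C j).1, (C j).2)].
Definition pull (y : {ffun 'I_n -> 'I_q}) (w : assignment (q * n)) : assignment n :=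
  [ffun i => w (enc (y i) i)].

Lemma sat_lift y C w : satisfies Lam (liftC y C) w = satisfies Lam C (pull y w).
Proof.
rewrite /satisfies; congr Lam; apply/ffunP => j; rewrite !ffunE /lit_val /=.
by rewrite ?ffunE.
Qed.

Lemma val_lift y (I : instance k n) w :
  inst_val R Lam (map (liftC y) I) w = inst_val R Lam I (pull y w).
Proof.
rewrite /inst_val size_map count_map; congr (_%:R / _).
by apply: eq_count => C /=; rewrite sat_lift.
Qed.

Lemma val_ge0 N (I : instance k N) x : 0 <= inst_val R Lam I x.
Proof. by rewrite /inst_val divr_ge0 ?ler0n. Qed.

Lemma val_le_opt N (I : instance k N) x : inst_val R Lam I x <= opt R Lam I.
Proof. by rewrite /opt (bigD1 x) //= le_max lexx. Qed.
End Aux.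

Theorem lemma7p3 (R : realFieldType) (k : nat) (Lam : predicate k) (c : R)
    (n : nat) (Istar : instance k n) (s : R) (q : nat)
    (g : 'I_q -> 'I_q -> sign) :
  @opt R k n Lam Istar = s ->
  let f := fun x : assignment n => c - @inst_val R k n Lam Istar x in
  exists (Iy : {ffun 'I_n -> 'I_q} -> instance k (q * n))
         (xt : {ffun 'I_n -> 'I_q} -> assignment (q * n)),
    (forall y, in_family Lam s (Iy y)) /\
    (forall x y, MNs Lam c (Iy y) (xt x) = Mgf f g x y).
Proof.
move=> Hs f.
exists (fun y => map (@liftC k n q y) Istar).
exists (fun x => [ffun v => g (x (@dec n q v).2) (@dec n q v).1]).
split.
  move=> y; rewrite /in_family /opt.
  apply: (big_ind (fun z => z <= s)).
  - rewrite -Hs; apply: (le_trans (val_ge0 R k Lam n Istar [ffun=> false])).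
    exact: val_le_opt.
  - by move=> a b Ha Hb; rewrite ge_max Ha Hb.
  - by move=> w _; rewrite val_lift -Hs val_le_opt.
move=> x y; rewrite /MNs /Mgf /f val_lift; congr (c - inst_val _ _ _ _).
by apply/ffunP => i; rewrite !ffunE decK.
Qed.
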